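(* Let $q\ge 2$ be an integer, $s\in(0,2)$, and let $P(x,t)=|\Psi(x,t)|^2$ be as in the context. Put $\langle x\rangle(t)=\int_0^\pi x\,P(x,t)\,dx$. If $q$ is even, then $$\langle x\rangle(t)=\frac{\pi}{2}-\frac{16}{\pi}\big(1-q^{2(s-2)}\big)\sum_{k=1}^{\infty}\frac{q^{k(s-1)}}{(q^{2k}-1)^2}\cos\big((q^{2k}-1)t\big),$$ and $\langle x\rangle$ is continuously differentiable, with $$\frac{d\langle x\rangle}{dt}(t)=\frac{16}{\pi}\big(1-q^{2(s-2)}\big)\sum_{k=1}^\infty\frac{q^{k(s-1)}}{q^{2k}-1}\sin\big((q^{2k}-1)t\big),$$ an absolutely and uniformly convergent series. If $q$ is odd, then $\langle x\rangle(t)=\pi/2$ for all $t$.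
   Context: For an integer $q\ge2$ and $s\in(0,2)$ define, for $x\in[0,\pi]$ and $t\in\mathbb R$, $$\Psi(x,t)=N\sum_{n=0}^{\infty} q^{n(s-2)}\sin(q^n x)\,e^{-i q^{2n} t},\qquad N=\sqrt{\tfrac{2}{\pi}\big(1-q^{2(s-2)}\big)},$$ and let $P(x,t)=|\Psi(x,t)|^2$. *)

(* Defs.v *)
From Stdlib Require Import Reals Lra.
From Coquelicot Require Import Coquelicot.
Open Scope R_scope.

Definition amp (q : nat) (s : R) (n : nat) : R := Rpower (INR q) (INR n * (s - 2)).

Definition Nc (q : nat) (s : R) : R :=
  sqrt (2 / PI * (1 - Rpower (INR q) (2 * (s - 2)))).

(* Psi(x,t) = N sum_n q^{n(s-2)} sin(q^n x) e^{-i q^{2n} t}; since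
   e^{-i a} = cos a - i sin a, its real and imaginary parts are: *)
Definition RePsi (q : nat) (s x t : R) : R :=
  Nc q s * Series (fun n => amp q s n * sin (INR q ^ n * x) * cos (INR q ^ (2 * n) * t)).
Definition ImPsi (q : nat) (s x t : R) : R :=
  - (Nc q s * Series (fun n => amp q s n * sin (INR q ^ n * x) * sin (INR q ^ (2 * n) * t))).

Definition Pdens (q : nat) (s x t : R) : R := RePsi q s x t ^ 2 + ImPsi q s x t ^ 2.

Definition xmean (q : nat) (s t : R) : R := RInt (fun x => x * Pdens q s x t) 0 PI.

Definition Ccoef (q : nat) (s : R) : R := 16 / PI * (1 - Rpower (INR q) (2 * (s - 2))).

(* terms for k >= 1 (index shifted: term j corresponds to k = j+1) *)
Definition xm_cos_term (q : nat) (s t : R) (j : nat) : R :=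
  let k := S j in
  Rpower (INR q) (INR k * (s - 1)) / (INR q ^ (2 * k) - 1) ^ 2
    * cos ((INR q ^ (2 * k) - 1) * t).
Definition xm_sin_term (q : nat) (s t : R) (j : nat) : R :=
  let k := S j in
  Rpower (INR q) (INR k * (s - 1)) / (INR q ^ (2 * k) - 1)
    * sin ((INR q ^ (2 * k) - 1) * t).

(* Main.v *)
Require Import Defs.
From Stdlib Require Import Reals Lra Lia Ranalysis5.
From Coquelicot Require Import Coquelicot.
Open Scope R_scope.

Fixpoint ps (a : nat -> R) (M : nat) : R :=
  match M with O => 0 | S m => ps a m + a m end.

Lemma ps_sum_n a m : ps a (S m) = sum_n a m.
Proof.
  induction m. simpl. rewrite sum_O. ring.
  rewrite sum_Sn. change (ps a (S m) + a (S m) = plus (sum_n a m) (a (S m))).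
  rewrite IHm. reflexivity.
Qed.

Lemma geom_ser K r : 0 <= r < 1 -> ex_series (fun n => K * r ^ n) /\ Series (fun n => K * r ^ n) = K / (1 - r).
Proof.
  intros Hr. assert (H: is_series (fun n => r ^ n) (/ (1 - r))).
  { apply is_series_geom. rewrite Rabs_pos_eq; lra. }
  split. apply (ex_series_scal_l K (fun n => r ^ n)). eexists; exact H.
  rewrite (Series_scal_l K (fun n => r ^ n)). rewrite (is_series_unique _ _ H). unfold Rdiv. ring.
Qed.

Lemma ex_series_le_R (a b : nat -> R) : (forall n, Rabs (a n) <= b n) -> ex_series b -> ex_series a.
Proof. intros H Hb. apply (@ex_series_le R_AbsRing R_CompleteNormedModule a b); auto. Qed.

Lemma ser_bound (b : nat -> R) K r : 0 <= r < 1 -> (forall n, Rabs (b n) <= K * r ^ n) ->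
  ex_series b /\ Rabs (Series b) <= K / (1 - r).
Proof.
  intros Hr Hb. destruct (geom_ser K r Hr) as [Hex Hs].
  assert (Ha : ex_series (fun n => Rabs (b n))).
  { apply (ex_series_le_R _ (fun n => K * r ^ n)); auto.
    intros n. rewrite Rabs_Rabsolu. auto. }
  split.
  - apply (ex_series_le_R _ (fun n => K * r ^ n)); auto.
  - eapply Rle_trans. apply Series_Rabs; auto. rewrite <- Hs. apply Series_le; auto.
    intros n; split; [apply Rabs_pos| auto].
Qed.

Lemma tail_bound (a : nat -> R) K r : 0 <= r < 1 -> (forall n, Rabs (a n) <= K * r ^ n) ->
  ex_series a /\ forall M, Rabs (Series a - ps a M) <= K * r ^ M / (1 - r).
Proof.
  intros Hr Ha. destruct (ser_bound a K r Hr Ha) as [Hex Hb]. split; auto.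
  intros [|m].
  - simpl. rewrite Rminus_0_r, Rmult_1_r. auto.
  - rewrite (Series_incr_n a (S m)); [|lia|auto]. simpl pred.
    rewrite ps_sum_n, sum_n_Reals.
    replace (sum_f_R0 a m + Series (fun k => a (S m + k)%nat) - sum_f_R0 a m) with
      (Series (fun k => a (S m + k)%nat)) by ring.
    apply (ser_bound (fun k => a (S m + k)%nat) (K * r ^ S m) r Hr).
    intros n. rewrite Rmult_assoc, <- pow_add. apply Ha.
Qed.

Lemma small_pow r K eps : 0 <= r < 1 -> 0 < eps -> exists N, forall n, (N <= n)%nat -> K * r ^ n < eps.
Proof.
  intros Hr He.
  destruct (pow_lt_1_zero r ltac:(rewrite Rabs_pos_eq; lra) (eps / (Rabs K + 1))) as [N HN].
  { apply Rdiv_lt_0_compat; auto. pose proof (Rabs_pos K); lra. }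
  exists N. intros n Hn. specialize (HN n Hn). rewrite Rabs_pos_eq in HN by (apply pow_le; lra).
  assert (0 <= r ^ n) by (apply pow_le; lra).
  assert (K * r ^ n <= Rabs K * r ^ n) by (apply Rmult_le_compat_r; [auto| apply RRle_abs]).
  assert (Rabs K * r ^ n < eps).
  { apply Rmult_lt_compat_l with (r := Rabs K + 1) in HN; [|pose proof (Rabs_pos K); lra].
    field_simplify in HN; [|pose proof (Rabs_pos K); lra].
    pose proof (Rabs_pos K); nra. }
  lra.
Qed.

Lemma eq_of_bound X Y K r : 0 <= r < 1 -> (forall M, Rabs (X - Y) <= K * r ^ M) -> X = Y.
Proof.
  intros Hr H. destruct (Req_dec X Y) as [|Hn]; auto.
  assert (0 < Rabs (X - Y)) by (apply Rabs_pos_lt; lra).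
  destruct (small_pow r K (Rabs (X - Y)) Hr H0) as [N HN].
  specialize (HN N (le_n _)). specialize (H N). lra.
Qed.

Lemma cvu_ps (h : nat -> R -> R) K r c (d : posreal) : 0 <= r < 1 -> (forall n x, Rabs (h n x) <= K * r ^ n) ->
  CVU (fun M y => ps (fun n => h n y) M) (fun y => Series (fun n => h n y)) c d.
Proof.
  intros Hr Hh eps Heps. destruct (small_pow r (K / (1 - r)) eps Hr Heps) as [N HN].
  exists N. intros n y Hn _. eapply Rle_lt_trans.
  apply (proj2 (tail_bound (fun k => h k y) K r Hr (fun k => Hh k y))).
  specialize (HN n Hn). replace (K * r ^ n / (1 - r)) with (K / (1 - r) * r ^ n) by (field; lra). auto.
Qed.

Lemma ps_cont (h : nat -> R -> R) : (forall n x, continuous (h n) x) ->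
  forall M x, continuous (fun y => ps (fun n => h n y) M) x.
Proof.
  intros Hh M x. induction M.
  - simpl. apply continuous_const.
  - simpl. apply (continuous_plus (fun y => ps (fun n => h n y) M) (h M)); auto.
Qed.

Lemma series_cont (h : nat -> R -> R) K r : 0 <= r < 1 -> (forall n x, Rabs (h n x) <= K * r ^ n) ->
  (forall n x, continuous (h n) x) -> forall x, continuous (fun y => Series (fun n => h n y)) x.
Proof.
  intros Hr Hh Hc x. apply continuity_pt_filterlim.
  assert (Hd : 0 < Rabs x + 1) by (pose proof (Rabs_pos x); lra).
  apply (CVU_continuity (fun M y => ps (fun n => h n y) M) _ 0 (mkposreal _ Hd)).
  - apply (cvu_ps h K r); auto.
  - intros n y _. apply continuity_pt_filterlim. apply ps_cont; auto.
  - unfold Boule; simpl. rewrite Rminus_0_r. lra.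
Qed.

Lemma ps_deriv (h h' : nat -> R -> R) : (forall n x, is_derive (h n) x (h' n x)) ->
  forall M x, is_derive (fun y => ps (fun n => h n y) M) x (ps (fun n => h' n x) M).
Proof.
  intros Hh M x. induction M.
  - simpl. apply (is_derive_const 0).
  - simpl. apply (is_derive_plus (fun y => ps (fun n => h n y) M) (h M)); auto.
Qed.

Lemma series_deriv (h h' : nat -> R -> R) K r : 0 <= r < 1 -> (forall n x, Rabs (h n x) <= K * r ^ n) ->
  (forall n x, Rabs (h' n x) <= K * r ^ n) ->
  (forall n x, is_derive (h n) x (h' n x)) -> (forall n x, continuous (h' n) x) ->
  forall x, is_derive (fun y => Series (fun n => h n y)) x (Series (fun n => h' n x)).
Proof.
  intros Hr Hh Hh' Hd Hc x. apply is_derive_Reals.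
  assert (Hd0 : 0 < Rabs x + 1) by (pose proof (Rabs_pos x); lra).
  apply (derivable_pt_lim_CVU (fun M y => ps (fun n => h n y) M) (fun M y => ps (fun n => h' n y) M)
     _ (fun y => Series (fun n => h' n y)) x 0 (mkposreal _ Hd0)).
  - unfold Boule; simpl. rewrite Rminus_0_r. lra.
  - intros y n _. apply is_derive_Reals. apply ps_deriv; auto.
  - intros y _ eps Heps. destruct (small_pow r (K / (1 - r)) eps Hr Heps) as [N HN].
    exists N. intros n Hn. unfold Rdist. rewrite Rabs_minus_sym. eapply Rle_lt_trans.
    apply (proj2 (tail_bound (fun k => h k y) K r Hr (fun k => Hh k y))).
    specialize (HN n Hn). replace (K * r ^ n / (1 - r)) with (K / (1 - r) * r ^ n) by (field; lra). auto.
  - apply (cvu_ps h' K r); auto.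
  - intros y _. apply continuity_pt_filterlim. apply (series_cont h' K r); auto.
Qed.
Lemma int_off j l : j - l <> 0 -> j + l <> 0 -> sin (j * PI) = 0 -> sin (l * PI) = 0 ->
  is_RInt (fun x => x * sin (j * x) * sin (l * x)) 0 PI
    ((cos (j * PI) * cos (l * PI) - 1) / 2 * (/ (j - l) ^ 2 - / (j + l) ^ 2)).
Proof.
  intros Hd Hs Hj Hl.
  set (A := fun x => / 2 * (x * sin (j * x - l * x) / (j - l) + cos (j * x - l * x) / (j - l) ^ 2
            - x * sin (j * x + l * x) / (j + l) - cos (j * x + l * x) / (j + l) ^ 2)).
  replace ((cos (j * PI) * cos (l * PI) - 1) / 2 * (/ (j - l) ^ 2 - / (j + l) ^ 2)) with (minus (A PI) (A 0)).
  - apply (@is_RInt_derive R_CompleteNormedModule).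
    + intros x _. unfold A. auto_derive; [tauto|].
      replace (j * x + - (l * x)) with (j * x - l * x) by ring.
      rewrite sin_minus, cos_minus, sin_plus, cos_plus. field. auto.
    + intros x _. apply (@ex_derive_continuous R_AbsRing R_NormedModule). auto_derive. auto.
  - unfold A, minus, plus, opp; simpl.
    rewrite sin_minus, cos_minus, sin_plus, cos_plus, Hj, Hl.
    replace (j * 0 - l * 0) with 0 by ring. replace (j * 0 + l * 0) with 0 by ring. rewrite cos_0. field. auto.
Qed.

Lemma int_diag j : j <> 0 -> sin (j * PI) = 0 ->
  is_RInt (fun x => x * sin (j * x) * sin (j * x)) 0 PI (PI ^ 2 / 4).
Proof.
  intros Hj Hs.
  set (B := fun x => x ^ 2 / 4 - (x * sin (2 * (j * x)) / (2 * j) + cos (2 * (j * x)) / (4 * j ^ 2)) / 2).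
  replace (PI ^ 2 / 4) with (minus (B PI) (B 0)).
  - apply (@is_RInt_derive R_CompleteNormedModule).
    + intros x _. unfold B. auto_derive; [tauto|].
      rewrite cos_2a_sin. field. auto.
    + intros x _. apply (@ex_derive_continuous R_AbsRing R_NormedModule). auto_derive. auto.
  - unfold B, minus, plus, opp; simpl.
    rewrite sin_2a, cos_2a_sin, Hs.
    replace (2 * (j * 0)) with 0 by ring. rewrite cos_0. field. auto.
Qed.
Lemma ps_lin (f g : nat -> R) al be M : ps (fun n => al * f n + be * g n) M = al * ps f M + be * ps g M.
Proof. induction M; simpl; [ring|rewrite IHM; ring]. Qed.

Lemma ps_ext (f g : nat -> R) M : (forall n, (n < M)%nat -> f n = g n) -> ps f M = ps g M.
Proof. induction M; intros H; simpl; auto. rewrite IHM, H; auto. Qed.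

Lemma is_RInt_lin (f g h : R -> R) a b If Ig al be v : is_RInt f a b If -> is_RInt g a b Ig ->
  (forall x, h x = al * f x + be * g x) -> v = al * If + be * Ig -> is_RInt h a b v.
Proof.
  intros Hf Hg Hh Hv. subst v.
  apply (is_RInt_ext (fun x => plus (scal al (f x)) (scal be (g x)))).
  { intros x _. rewrite Hh. reflexivity. }
  apply (@is_RInt_plus R_NormedModule); apply (@is_RInt_scal R_NormedModule); auto.
Qed.

Lemma is_RInt_eqv (f : R -> R) a b v v' : is_RInt f a b v -> v = v' -> is_RInt f a b v'.
Proof. intros H <-. exact H. Qed.

Lemma is_RInt_zero a b : is_RInt (fun _ => 0) a b 0.
Proof.
  eapply is_RInt_eqv. apply (@is_RInt_const R_NormedModule a b 0).
  unfold scal; simpl; unfold mult; simpl; ring.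
Qed.

Section Fin.
Variables (w b b' : nat -> R) (I : nat -> nat -> R).
Hypothesis Hdiag : forall n, is_RInt (fun x => x * sin (w n * x) * sin (w n * x)) 0 PI (PI ^ 2 / 4).
Hypothesis Hoff : forall m n, m <> n -> is_RInt (fun x => x * sin (w m * x) * sin (w n * x)) 0 PI (I m n).

Definition FM (c : nat -> R) (M : nat) (x : R) := ps (fun n => c n * sin (w n * x)) M.

Lemma cross_int (c : nat -> R) m M : (M <= m)%nat ->
  is_RInt (fun x => x * sin (w m * x) * FM c M x) 0 PI (ps (fun n => c n * I n m) M).
Proof.
  induction M; intros HM.
  - simpl. apply (is_RInt_ext (fun _ => 0)). { intros; unfold FM; simpl; ring. } apply is_RInt_zero.
  - simpl. apply (is_RInt_lin _ _ _ _ _ _ _ 1 (c M) _ (IHM ltac:(lia)) (Hoff M m ltac:(lia))).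
    + intros x. unfold FM; simpl. ring.
    + ring.
Qed.

Definition TM (M : nat) := PI ^ 2 / 4 * ps (fun n => b n ^ 2 + b' n ^ 2) M +
   2 * ps (fun m => ps (fun n => (b n * b m + b' n * b' m) * I n m) m) M.

Lemma fin_int M : is_RInt (fun x => x * (FM b M x ^ 2 + FM b' M x ^ 2)) 0 PI (TM M).
Proof.
  induction M.
  - apply (is_RInt_ext (fun _ => 0)). { intros; unfold FM; simpl; ring. }
    eapply is_RInt_eqv. apply is_RInt_zero. unfold TM; simpl; ring.
  - pose proof (is_RInt_lin _ _ _ _ _ _ _ (2 * b M) (2 * b' M) _ (cross_int b M M (le_n _)) (cross_int b' M M (le_n _))
        (fun x => eq_refl) eq_refl) as Hc.
    pose proof (is_RInt_lin _ _ _ _ _ _ _ 1 1 _ IHM Hc (fun x => eq_refl) eq_refl) as H1.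
    apply (is_RInt_lin _ _ _ _ _ _ _ 1 (b M ^ 2 + b' M ^ 2) _ H1 (Hdiag M)).
    + intros x. unfold FM; simpl. fold (FM b M x). fold (FM b' M x). ring.
    + assert (E : ps (fun n => (b n * b M + b' n * b' M) * I n M) M =
         b M * ps (fun n => b n * I n M) M + b' M * ps (fun n => b' n * I n M) M).
      { rewrite <- (ps_lin (fun n => b n * I n M) (fun n => b' n * I n M)). apply ps_ext. intros; ring. }
      unfold TM; simpl. rewrite E. ring.
Qed.
End Fin.

Section Main.
Variables (q : nat) (s : R).
Hypothesis Hq : (2 <= q)%nat.
Hypothesis Hs : 0 < s < 2.

Definition r := Rpower (INR q) (s - 2).
Definition w n := INR q ^ n.

Lemma q_gt1 : 1 < INR q.
Proof. apply le_INR in Hq. simpl in Hq. lra. Qed.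

Lemma r_pos : 0 < r.
Proof. unfold r, Rpower. apply exp_pos. Qed.

Lemma r_lt1 : r < 1.
Proof.
  unfold r, Rpower. rewrite <- exp_0. apply exp_increasing.
  pose proof q_gt1. assert (0 < ln (INR q)). { rewrite <- ln_1. apply ln_increasing; lra. }
  nra.
Qed.

Lemma r_bnd : 0 <= r < 1.
Proof. pose proof r_pos; pose proof r_lt1; lra. Qed.

Lemma amp_r n : amp q s n = r ^ n.
Proof.
  unfold amp, r. rewrite <- Rpower_pow by (unfold Rpower; apply exp_pos).
  rewrite Rpower_mult. f_equal. ring.
Qed.

Lemma rp2 : Rpower (INR q) (2 * (s - 2)) = r ^ 2.
Proof. rewrite <- amp_r. unfold amp. f_equal. Qed.

Lemma rps1 k : Rpower (INR q) (INR k * (s - 1)) = r ^ k * INR q ^ k.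
Proof.
  rewrite <- amp_r. unfold amp. rewrite <- Rpower_pow by (pose proof q_gt1; lra).
  rewrite <- Rpower_plus. f_equal. ring.
Qed.

Lemma w_ge1 n : 1 <= w n.
Proof. unfold w. apply pow_R1_Rle. pose proof q_gt1; lra. Qed.

Lemma w_ge2 n : 2 <= w (S n).
Proof.
  unfold w. simpl. pose proof (w_ge1 n). unfold w in H. pose proof q_gt1.
  apply le_INR in Hq. simpl in Hq. nra.
Qed.

Lemma w_inj m n : m <> n -> w m - w n <> 0.
Proof.
  intros H. unfold w. destruct (Nat.lt_gt_cases m n) as [[Hl|Hl] _]; [lia| |];
  pose proof (Rlt_pow (INR q) _ _ q_gt1 Hl); lra.
Qed.

Lemma neg1_pow N : (-1) ^ N = if Nat.even N then 1 else -1.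
Proof.
  induction N. reflexivity.
  rewrite Nat.even_succ, <- Nat.negb_even. simpl. rewrite IHN. destruct (Nat.even N); simpl; ring.
Qed.

Lemma trig_nat N : sin (INR N * PI) = 0 /\ cos (INR N * PI) = (-1) ^ N.
Proof.
  induction N. simpl. rewrite Rmult_0_l, sin_0, cos_0. auto.
  rewrite S_INR, Rmult_plus_distr_r, Rmult_1_l, sin_plus, cos_plus, sin_PI, cos_PI.
  destruct IHN as [H1 H2]. rewrite H1, H2. simpl. split; ring.
Qed.

Lemma sin_w n : sin (w n * PI) = 0.
Proof. unfold w. rewrite <- pow_INR. apply trig_nat. Qed.

Lemma cos_w n : cos (w n * PI) = if Nat.even q then (match n with O => -1 | S _ => 1 end) else -1.
Proof.
  unfold w. rewrite <- pow_INR. rewrite (proj2 (trig_nat _)), neg1_pow.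
  destruct n. simpl. destruct (Nat.even q); reflexivity.
  rewrite Nat.even_pow by lia. destruct (Nat.even q); reflexivity.
Qed.

Definition Iv m n := (cos (w m * PI) * cos (w n * PI) - 1) / 2 * (/ (w m - w n) ^ 2 - / (w m + w n) ^ 2).

Lemma Hdiag_q n : is_RInt (fun x => x * sin (w n * x) * sin (w n * x)) 0 PI (PI ^ 2 / 4).
Proof. apply int_diag. pose proof (w_ge1 n); lra. apply sin_w. Qed.

Lemma Hoff_q m n : m <> n -> is_RInt (fun x => x * sin (w m * x) * sin (w n * x)) 0 PI (Iv m n).
Proof.
  intros H. apply int_off. apply w_inj; auto. pose proof (w_ge1 n); pose proof (w_ge1 m); lra.
  apply sin_w. apply sin_w.
Qed.

Lemma Iv_odd m n : Nat.even q = false -> Iv m n = 0.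
Proof. intros H. unfold Iv. rewrite !cos_w, H. unfold Rdiv; ring. Qed.

Lemma Iv_even m n : Nat.even q = true -> Iv (S m) (S n) = 0.
Proof. intros H. unfold Iv. rewrite !cos_w, H. unfold Rdiv; ring. Qed.

Lemma Iv_even0 n : Nat.even q = true -> Iv 0 (S n) = - (/ (1 - w (S n)) ^ 2 - / (1 + w (S n)) ^ 2).
Proof. intros H. unfold Iv. rewrite !cos_w, H. change (w 0) with 1. pose proof (w_ge2 n). field; repeat split; lra. Qed.


Definition bc t n := amp q s n * cos (INR q ^ (2 * n) * t).
Definition bs t n := amp q s n * sin (INR q ^ (2 * n) * t).
Definition cr t m := ps (fun n => (bc t n * bc t m + bs t n * bs t m) * Iv n m) m.

Lemma ps_zero M : ps (fun _ => 0) M = 0.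
Proof. induction M; simpl; [auto|rewrite IHM; ring]. Qed.

Lemma ps_first f M : (forall n, (1 <= n)%nat -> f n = 0) -> ps f (S M) = f 0%nat.
Proof.
  intros H. induction M. simpl; ring.
  change (ps f (S M) + f (S M) = f 0%nat). rewrite IHM, (H (S M)) by lia. ring.
Qed.

Lemma cr_odd t m : Nat.even q = false -> cr t m = 0.
Proof.
  intros H. unfold cr. rewrite (ps_ext _ (fun _ => 0)). apply ps_zero.
  intros n _. rewrite Iv_odd by auto. ring.
Qed.

Lemma w2 k : INR q ^ (2 * k) = w k ^ 2.
Proof. unfold w. rewrite Nat.mul_comm, pow_mult. reflexivity. Qed.

Lemma cr_evenS t j : Nat.even q = true -> cr t (S j) = -4 * xm_cos_term q s t j.
Proof.
  intros H. unfold cr. rewrite ps_first.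
  2: { intros n Hn. destruct n; [lia|]. rewrite Iv_even by auto. ring. }
  rewrite Iv_even0 by auto. unfold bc, bs, xm_cos_term. cbv zeta.
  rewrite rps1, !amp_r, !w2. fold (w (S j)).
  change (w 0) with 1. change (r ^ 0) with 1.
  replace ((w (S j) ^ 2 - 1) * t) with (w (S j) ^ 2 * t - 1 ^ 2 * t) by ring. rewrite cos_minus.
  pose proof (w_ge2 j). assert (4 <= w (S j) ^ 2) by nra. field. repeat split; lra.
Qed.

Lemma frac1 Q : 2 <= Q -> 0 <= Q / (Q ^ 2 - 1) ^ 2 <= 1.
Proof.
  intros HQ. assert (HD : 3 <= Q ^ 2 - 1) by (simpl; nra).
  set (D := Q ^ 2 - 1) in *. assert (Q <= D) by (unfold D; simpl; nra).
  assert (0 < D ^ 2) by (simpl; nra). split.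
  apply Rdiv_le_0_compat; lra.
  unfold Rdiv. apply Rle_trans with (D ^ 2 * / D ^ 2).
  apply Rmult_le_compat_r. left; apply Rinv_0_lt_compat; auto. simpl; nra.
  rewrite Rinv_r; lra.
Qed.

Lemma frac2 Q : 2 <= Q -> 0 <= Q / (Q ^ 2 - 1) <= 1.
Proof.
  intros HQ. assert (HD : 3 <= Q ^ 2 - 1) by (simpl; nra).
  set (D := Q ^ 2 - 1) in *. assert (Q <= D) by (unfold D; simpl; nra).
  assert (0 < D) by lra. split.
  apply Rdiv_le_0_compat; lra.
  unfold Rdiv. apply Rle_trans with (D * / D).
  apply Rmult_le_compat_r. left; apply Rinv_0_lt_compat; auto. lra.
  rewrite Rinv_r; lra.
Qed.

Lemma abs_trig_bound c y : 0 <= c <= 1 -> Rabs (c * y) <= 1 -> True.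
Proof. auto. Qed.

Lemma bnd_mul A c y : 0 <= A -> 0 <= c <= 1 -> Rabs y <= 1 -> Rabs (A * c * y) <= A.
Proof.
  intros HA Hc Hy. rewrite !Rabs_mult, (Rabs_pos_eq A), (Rabs_pos_eq c) by lra.
  pose proof (Rabs_pos y).
  assert (H1: c * Rabs y <= 1 * 1) by (apply Rmult_le_compat; lra). rewrite Rmult_assoc.
  apply Rle_trans with (A * 1); [apply Rmult_le_compat_l; lra | lra].
Qed.

Lemma abs_cos y : Rabs (cos y) <= 1.
Proof. apply Rabs_le. apply COS_bound. Qed.
Lemma abs_sin y : Rabs (sin y) <= 1.
Proof. apply Rabs_le. apply SIN_bound. Qed.

Lemma xm_cos_bound t j : Rabs (xm_cos_term q s t j) <= r ^ S j.
Proof.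
  unfold xm_cos_term. cbv zeta. rewrite rps1, w2. fold (w (S j)).
  replace (r ^ S j * w (S j) / (w (S j) ^ 2 - 1) ^ 2) with (r ^ S j * (w (S j) / (w (S j) ^ 2 - 1) ^ 2))
    by (unfold Rdiv; ring).
  apply bnd_mul. apply pow_le; pose proof r_pos; lra. apply frac1, w_ge2. apply abs_cos.
Qed.

Lemma xm_sin_bound t j : Rabs (xm_sin_term q s t j) <= r ^ S j.
Proof.
  unfold xm_sin_term. cbv zeta. rewrite rps1, w2. fold (w (S j)).
  replace (r ^ S j * w (S j) / (w (S j) ^ 2 - 1)) with (r ^ S j * (w (S j) / (w (S j) ^ 2 - 1)))
    by (unfold Rdiv; ring).
  apply bnd_mul. apply pow_le; pose proof r_pos; lra. apply frac2, w_ge2. apply abs_sin.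
Qed.

Lemma rS_le j : r ^ S j <= 1 * r ^ j.
Proof. simpl. pose proof r_bnd. pose proof (pow_le r j ltac:(lra)). nra. Qed.

Lemma xm_deriv j t : is_derive (fun t => xm_cos_term q s t j) t (- xm_sin_term q s t j).
Proof.
  unfold xm_cos_term, xm_sin_term. cbv zeta. rewrite w2. pose proof (w_ge2 j).
  set (C := Rpower (INR q) (INR (S j) * (s - 1))). assert (HD : 3 <= w (S j) ^ 2 - 1) by (simpl; nra).
  set (D := w (S j) ^ 2 - 1) in *.
  auto_derive; auto. field. lra.
Qed.

Lemma xm_sin_cont j t : continuous (fun t => xm_sin_term q s t j) t.
Proof.
  apply (@ex_derive_continuous R_AbsRing R_NormedModule).
  unfold xm_sin_term. cbv zeta. auto_derive. auto.
Qed.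

Lemma cr_bound t m : Rabs (cr t m) <= 4 * r ^ m.
Proof.
  pose proof r_bnd. pose proof (pow_le r m ltac:(lra)).
  destruct (Nat.even q) eqn:E.
  - destruct m. unfold cr; simpl. rewrite Rabs_R0. lra.
    rewrite cr_evenS by auto. rewrite Rabs_mult. pose proof (xm_cos_bound t m).
    rewrite Rabs_left by lra. lra.
  - rewrite cr_odd by auto. rewrite Rabs_R0. lra.
Qed.

Lemma bnd_mul2 A c y : 0 <= A -> Rabs c <= 1 -> Rabs y <= 1 -> Rabs (A * c * y) <= A.
Proof.
  intros HA Hc Hy. rewrite !Rabs_mult, (Rabs_pos_eq A) by lra.
  pose proof (Rabs_pos y). pose proof (Rabs_pos c).
  assert (H1: Rabs c * Rabs y <= 1 * 1) by (apply Rmult_le_compat; lra). rewrite Rmult_assoc.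
  apply Rle_trans with (A * 1); [apply Rmult_le_compat_l; lra | lra].
Qed.

Definition hF t n x := bc t n * sin (w n * x).
Definition hG t n x := bs t n * sin (w n * x).
Definition Fs t x := Series (fun n => hF t n x).
Definition Gs t x := Series (fun n => hG t n x).

Lemma hF_bound t n x : Rabs (hF t n x) <= 1 * r ^ n.
Proof.
  unfold hF, bc. rewrite amp_r, Rmult_1_l.
  apply bnd_mul2. apply pow_le; pose proof r_pos; lra. apply abs_cos. apply abs_sin.
Qed.

Lemma hG_bound t n x : Rabs (hG t n x) <= 1 * r ^ n.
Proof.
  unfold hG, bs. rewrite amp_r, Rmult_1_l.
  apply bnd_mul2. apply pow_le; pose proof r_pos; lra. apply abs_sin. apply abs_sin.
Qed.

Lemma hF_cont t n x : continuous (hF t n) x.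
Proof. apply (@ex_derive_continuous R_AbsRing R_NormedModule). unfold hF. auto_derive. auto. Qed.
Lemma hG_cont t n x : continuous (hG t n) x.
Proof. apply (@ex_derive_continuous R_AbsRing R_NormedModule). unfold hG. auto_derive. auto. Qed.

Lemma Fs_cont t x : continuous (Fs t) x.
Proof. apply (series_cont (hF t) 1 r r_bnd (hF_bound t) (hF_cont t)). Qed.
Lemma Gs_cont t x : continuous (Gs t) x.
Proof. apply (series_cont (hG t) 1 r r_bnd (hG_bound t) (hG_cont t)). Qed.

Lemma Pdens_eq x t : Pdens q s x t = Nc q s ^ 2 * (Fs t x ^ 2 + Gs t x ^ 2).
Proof.
  unfold Pdens, RePsi, ImPsi, Fs, Gs, hF, hG, bc, bs, w.
  rewrite (Series_ext (fun n => amp q s n * sin (INR q ^ n * x) * cos (INR q ^ (2 * n) * t))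
             (fun n => amp q s n * cos (INR q ^ (2 * n) * t) * sin (INR q ^ n * x))) by (intros; ring).
  rewrite (Series_ext (fun n => amp q s n * sin (INR q ^ n * x) * sin (INR q ^ (2 * n) * t))
             (fun n => amp q s n * sin (INR q ^ (2 * n) * t) * sin (INR q ^ n * x))) by (intros; ring).
  ring.
Qed.

Lemma cont_integrand (f g : R -> R) x : continuous f x -> continuous g x ->
  continuous (fun y => y * (f y ^ 2 + g y ^ 2)) x.
Proof.
  intros Hf Hg.
  apply (continuous_mult (fun y => y) (fun y => f y ^ 2 + g y ^ 2)). apply continuous_id.
  apply (continuous_plus (fun y => f y ^ 2) (fun y => g y ^ 2)).
  - apply (continuous_ext (fun y => f y * (f y * 1))). intros; simpl; ring.
    apply (continuous_mult f (fun y => f y * 1)); auto.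
    apply (continuous_mult f (fun y => 1)); auto. apply continuous_const.
  - apply (continuous_ext (fun y => g y * (g y * 1))). intros; simpl; ring.
    apply (continuous_mult g (fun y => g y * 1)); auto.
    apply (continuous_mult g (fun y => 1)); auto. apply continuous_const.
Qed.

Lemma exRInt_FG t : ex_RInt (fun x => x * (Fs t x ^ 2 + Gs t x ^ 2)) 0 PI.
Proof.
  apply (@ex_RInt_continuous R_CompleteNormedModule). intros z _.
  apply cont_integrand; [apply Fs_cont|apply Gs_cont].
Qed.

Lemma sq_diff A B e c : Rabs (A - B) <= e -> Rabs A <= c -> 0 <= e <= c -> Rabs (A ^ 2 - B ^ 2) <= 3 * c * e.
Proof.
  intros H1 H2 H3. replace (A ^ 2 - B ^ 2) with ((A - B) * (A + B)) by ring.
  rewrite Rabs_mult. assert (Rabs (A + B) <= 3 * c).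
  { replace (A + B) with (2 * A - (A - B)) by ring. eapply Rle_trans. apply Rabs_triang.
    rewrite Rabs_Ropp, Rabs_mult, (Rabs_pos_eq 2) by lra. lra. }
  pose proof (Rabs_pos (A - B)). pose proof (Rabs_pos (A + B)).
  replace (3 * c * e) with (e * (3 * c)) by ring. apply Rmult_le_compat; lra.
Qed.

Lemma pow_le1 M : r ^ M <= 1.
Proof. induction M; simpl. lra. pose proof r_bnd. pose proof (pow_le r M ltac:(lra)). nra. Qed.

Lemma pt_bound t M x : 0 <= x <= PI ->
  Rabs (x * (Fs t x ^ 2 + Gs t x ^ 2) - x * (FM w (bc t) M x ^ 2 + FM w (bs t) M x ^ 2))
   <= PI * (6 * (1 / (1 - r)) * (r ^ M / (1 - r))).
Proof.
  intros Hx. pose proof r_bnd as Hr.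
  destruct (tail_bound (fun n => hF t n x) 1 r Hr (fun n => hF_bound t n x)) as [_ HF].
  destruct (tail_bound (fun n => hG t n x) 1 r Hr (fun n => hG_bound t n x)) as [_ HG].
  assert (HF0 := HF 0%nat). assert (HG0 := HG 0%nat). specialize (HF M). specialize (HG M).
  simpl ps in HF0, HG0. rewrite Rminus_0_r, Rmult_1_l in HF0, HG0. simpl pow in HF0, HG0.
  rewrite Rmult_1_l in HF, HG.
  change (ps (fun n => hF t n x) M) with (FM w (bc t) M x) in HF.
  change (ps (fun n => hG t n x) M) with (FM w (bs t) M x) in HG.
  fold (Fs t x) in HF, HF0. fold (Gs t x) in HG, HG0.
  assert (He : 0 <= r ^ M / (1 - r) <= 1 / (1 - r)).
  { pose proof (pow_le1 M). pose proof (pow_le r M ltac:(lra)). split.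
    apply Rdiv_le_0_compat; lra. unfold Rdiv. apply Rmult_le_compat_r; [left; apply Rinv_0_lt_compat; lra | lra]. }
  pose proof (sq_diff _ _ _ _ HF HF0 He). pose proof (sq_diff _ _ _ _ HG HG0 He).
  replace (x * (Fs t x ^ 2 + Gs t x ^ 2) - x * (FM w (bc t) M x ^ 2 + FM w (bs t) M x ^ 2))
    with (x * ((Fs t x ^ 2 - FM w (bc t) M x ^ 2) + (Gs t x ^ 2 - FM w (bs t) M x ^ 2))) by ring.
  rewrite Rabs_mult, (Rabs_pos_eq x) by lra.
  apply Rmult_le_compat; [lra| apply Rabs_pos| lra|].
  eapply Rle_trans. apply Rabs_triang. lra.
Qed.

Definition Xv t := RInt (fun x => x * (Fs t x ^ 2 + Gs t x ^ 2)) 0 PI.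
Definition Tv t M := TM (bc t) (bs t) Iv M.

Lemma X_T t M : Rabs (Xv t - Tv t M) <= (PI * PI * (6 * (1 / (1 - r)) * / (1 - r))) * r ^ M.
Proof.
  pose proof (fin_int w (bc t) (bs t) Iv Hdiag_q Hoff_q M) as Hfin.
  unfold Xv, Tv. rewrite <- (is_RInt_unique _ _ _ _ Hfin).
  assert (E : RInt (fun x => x * (Fs t x ^ 2 + Gs t x ^ 2)) 0 PI -
     RInt (fun x => x * (FM w (bc t) M x ^ 2 + FM w (bs t) M x ^ 2)) 0 PI =
     RInt (fun x => x * (Fs t x ^ 2 + Gs t x ^ 2) - x * (FM w (bc t) M x ^ 2 + FM w (bs t) M x ^ 2)) 0 PI).
  { symmetry. apply (@RInt_minus R_CompleteNormedModule). apply exRInt_FG. eexists; exact Hfin. }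
  rewrite E. eapply Rle_trans. apply abs_RInt_le_const.
  - pose proof PI_RGT_0; lra.
  - apply (@ex_RInt_minus R_CompleteNormedModule). apply exRInt_FG. eexists; exact Hfin.
  - intros x Hx. apply pt_bound; auto.
  - rewrite Rminus_0_r. pose proof r_bnd. right. field. lra.
Qed.

Lemma g_geom t n : bc t n ^ 2 + bs t n ^ 2 = (r ^ 2) ^ n.
Proof.
  unfold bc, bs. rewrite amp_r.
  assert (E : (r ^ 2) ^ n = (r ^ n) ^ 2) by (rewrite <- !pow_mult; f_equal; lia).
  rewrite E. pose proof (sin2_cos2 (INR q ^ (2 * n) * t)) as H. unfold Rsqr in H.
  set (c := cos (INR q ^ (2 * n) * t)) in *. set (sn := sin (INR q ^ (2 * n) * t)) in *.
  replace ((r ^ n * c) ^ 2 + (r ^ n * sn) ^ 2) with ((r ^ n) ^ 2 * (sn * sn + c * c)) by ring.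
  rewrite H. ring.
Qed.

Lemma g_bound t n : Rabs (bc t n ^ 2 + bs t n ^ 2) <= 1 * r ^ n.
Proof.
  rewrite g_geom. assert (E : (r ^ 2) ^ n = r ^ n * r ^ n) by (rewrite <- pow_mult, <- pow_add; f_equal; lia).
  rewrite E. pose proof r_bnd.
  pose proof (pow_le r n ltac:(lra)). pose proof (pow_le1 n).
  rewrite Rabs_pos_eq by nra. nra.
Qed.

Lemma g_series t : Series (fun n => bc t n ^ 2 + bs t n ^ 2) = / (1 - r ^ 2).
Proof.
  rewrite (Series_ext _ (fun n => (r ^ 2) ^ n)) by apply g_geom.
  apply is_series_unique. apply is_series_geom. pose proof r_bnd.
  rewrite Rabs_pos_eq by (simpl; nra). simpl; nra.
Qed.

Definition Lv t := PI ^ 2 / 4 * / (1 - r ^ 2) + 2 * Series (cr t).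

Lemma T_L t M : Rabs (Tv t M - Lv t) <= (PI ^ 2 / 4 * (1 / (1 - r)) + 2 * (4 / (1 - r))) * r ^ M.
Proof.
  pose proof r_bnd as Hr.
  destruct (tail_bound _ 1 r Hr (g_bound t)) as [_ H1].
  destruct (tail_bound _ 4 r Hr (cr_bound t)) as [_ H2].
  specialize (H1 M). specialize (H2 M). rewrite g_series in H1.
  unfold Tv, TM, Lv. fold (cr t).
  replace (PI ^ 2 / 4 * ps (fun n => bc t n ^ 2 + bs t n ^ 2) M + 2 * ps (cr t) M -
    (PI ^ 2 / 4 * / (1 - r ^ 2) + 2 * Series (cr t)))
   with (- (PI ^ 2 / 4 * (/ (1 - r ^ 2) - ps (fun n => bc t n ^ 2 + bs t n ^ 2) M) + 2 * (Series (cr t) - ps (cr t) M))) by ring.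
  rewrite Rabs_Ropp. eapply Rle_trans. apply Rabs_triang. rewrite !Rabs_mult.
  rewrite (Rabs_pos_eq 2) by lra. rewrite (Rabs_pos_eq (PI ^ 2 / 4)) by (pose proof PI_RGT_0; apply Rdiv_le_0_compat; [apply pow_le|]; lra).
  assert (0 <= PI ^ 2 / 4) by (pose proof PI_RGT_0; apply Rdiv_le_0_compat; [apply pow_le|]; lra).
  replace ((PI ^ 2 / 4 * (1 / (1 - r)) + 2 * (4 / (1 - r))) * r ^ M) with
    (PI ^ 2 / 4 * (1 * r ^ M / (1 - r)) + 2 * (4 * r ^ M / (1 - r))) by (field; lra).
  apply Rplus_le_compat; apply Rmult_le_compat_l; lra.
Qed.

Lemma X_L t : Xv t = Lv t.
Proof.
  apply (eq_of_bound _ _ ((PI * PI * (6 * (1 / (1 - r)) * / (1 - r))) + (PI ^ 2 / 4 * (1 / (1 - r)) + 2 * (4 / (1 - r)))) r r_bnd).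
  intros M. replace (Xv t - Lv t) with ((Xv t - Tv t M) + (Tv t M - Lv t)) by ring.
  eapply Rle_trans. apply Rabs_triang. rewrite Rmult_plus_distr_r.
  apply Rplus_le_compat. apply X_T. apply T_L.
Qed.

Lemma Nc2 : Nc q s ^ 2 = 2 / PI * (1 - r ^ 2).
Proof.
  unfold Nc. rewrite rp2. apply pow2_sqrt. pose proof r_bnd. pose proof PI_RGT_0.
  apply Rmult_le_pos. apply Rdiv_le_0_compat; lra. simpl; nra.
Qed.

Lemma xmean_eq t : xmean q s t = Nc q s ^ 2 * Xv t.
Proof.
  unfold xmean, Xv.
  rewrite (RInt_ext _ (fun x => scal (Nc q s ^ 2) (x * (Fs t x ^ 2 + Gs t x ^ 2)))).
  - apply (@RInt_scal R_CompleteNormedModule). apply exRInt_FG.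
  - intros x _. rewrite Pdens_eq. unfold scal; simpl; unfold mult; simpl. ring.
Qed.

Lemma exRInt_main t : ex_RInt (fun x => x * Pdens q s x t) 0 PI.
Proof.
  apply (ex_RInt_ext (fun x => scal (Nc q s ^ 2) (x * (Fs t x ^ 2 + Gs t x ^ 2)))).
  - intros x _. rewrite Pdens_eq. unfold scal; simpl; unfold mult; simpl. ring.
  - apply (@ex_RInt_scal R_NormedModule). apply exRInt_FG.
Qed.

Lemma xmean_gen t : xmean q s t = PI / 2 + 2 * (2 / PI * (1 - r ^ 2)) * Series (cr t).
Proof.
  rewrite xmean_eq, X_L, Nc2. unfold Lv. pose proof r_bnd. pose proof PI_RGT_0.
  field. split; [lra|]. simpl; nra.
Qed.

Lemma xmean_odd t : Nat.even q = false -> xmean q s t = PI / 2.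
Proof.
  intros H. rewrite xmean_gen.
  rewrite (Series_ext _ (fun n => 0 * r ^ n)) by (intros; rewrite cr_odd by auto; ring).
  rewrite (Series_scal_l 0 (fun n => r ^ n)). ring.
Qed.

Lemma xmean_even t : Nat.even q = true -> xmean q s t = PI / 2 - Ccoef q s * Series (xm_cos_term q s t).
Proof.
  intros H. rewrite xmean_gen.
  destruct (tail_bound _ 4 r r_bnd (cr_bound t)) as [Hex _].
  rewrite (Series_incr_1 _ Hex).
  rewrite (Series_ext _ (fun j => -4 * xm_cos_term q s t j)) by (intros; apply cr_evenS; auto).
  rewrite (Series_scal_l (-4) (xm_cos_term q s t)).
  unfold cr at 1; simpl ps. unfold Ccoef. rewrite rp2. field. pose proof PI_RGT_0; lra.
Qed.

Lemma S_deriv t : is_derive (fun t => Series (xm_cos_term q s t)) t (- Series (xm_sin_term q s t)).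
Proof.
  rewrite <- Series_opp.
  apply (series_deriv (fun j t => xm_cos_term q s t j) (fun j t => - xm_sin_term q s t j) 1 r r_bnd).
  - intros n x. eapply Rle_trans. apply xm_cos_bound. apply rS_le.
  - intros n x. rewrite Rabs_Ropp. eapply Rle_trans. apply xm_sin_bound. apply rS_le.
  - intros n x. apply xm_deriv.
  - intros n x. apply (@ex_derive_continuous R_AbsRing R_NormedModule).
    unfold xm_sin_term. cbv zeta. auto_derive. auto.
Qed.

Lemma Ssin_cont t : continuous (fun t => Series (xm_sin_term q s t)) t.
Proof.
  apply (series_cont (fun j t => xm_sin_term q s t j) 1 r r_bnd).
  - intros n x. eapply Rle_trans. apply xm_sin_bound. apply rS_le.
  - intros n x. apply xm_sin_cont.
Qed.

Lemma xmean_deriv t : Nat.even q = true -> is_derive (xmean q s) t (Ccoef q s * Series (xm_sin_term q s t)).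
Proof.
  intros H. apply (is_derive_ext (fun t => PI / 2 - Ccoef q s * Series (xm_cos_term q s t))).
  { intros; symmetry; apply xmean_even; auto. }
  replace (Ccoef q s * Series (xm_sin_term q s t)) with (minus 0 (Ccoef q s * (- Series (xm_sin_term q s t)))).
  2: { unfold minus, plus, opp; simpl. ring. }
  apply (@is_derive_minus R_AbsRing R_NormedModule). apply (@is_derive_const R_AbsRing R_NormedModule).
  apply is_derive_scal. apply S_deriv.
Qed.

Lemma abs_series t : ex_series (fun j => Rabs (xm_sin_term q s t j)).
Proof.
  apply (ex_series_le_R _ (fun j => 1 * r ^ j)).
  - intros n. rewrite Rabs_Rabsolu. eapply Rle_trans. apply xm_sin_bound. apply rS_le.
  - apply (geom_ser 1 r r_bnd).
Qed.

Lemma unif (eps : posreal) : exists N : nat, forall n t, (N <= n)%nat ->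
   Rabs (sum_n (xm_sin_term q s t) n - Series (xm_sin_term q s t)) < eps.
Proof.
  destruct (small_pow r (1 / (1 - r)) eps r_bnd (cond_pos eps)) as [N HN].
  exists N. intros n t Hn. rewrite <- ps_sum_n, Rabs_minus_sym.
  eapply Rle_lt_trans.
  apply (proj2 (tail_bound (xm_sin_term q s t) 1 r r_bnd (fun j => Rle_trans _ _ _ (xm_sin_bound t j) (rS_le j)))).
  specialize (HN n Hn). pose proof (rS_le n). pose proof r_bnd.
  apply Rle_lt_trans with (1 / (1 - r) * r ^ n); auto.
  unfold Rdiv. rewrite Rmult_1_l, Rmult_1_l. rewrite Rmult_comm. apply Rmult_le_compat_l.
  left; apply Rinv_0_lt_compat; lra. lra.
Qed.

End Main.

Theorem mainTheorem8 (q : nat) (s : R) :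
  (2 <= q)%nat -> 0 < s < 2 ->
  (forall t, ex_RInt (fun x => x * Pdens q s x t) 0 PI) /\
  (Nat.even q = true ->
     (forall t, xmean q s t = PI / 2 - Ccoef q s * Series (xm_cos_term q s t)) /\
     (forall t, ex_derive (xmean q s) t /\ continuous (Derive (xmean q s)) t) /\
     (forall t, is_derive (xmean q s) t (Ccoef q s * Series (xm_sin_term q s t))) /\
     (forall t, ex_series (fun j => Rabs (xm_sin_term q s t j))) /\
     (forall eps : posreal, exists N : nat, forall n t, (N <= n)%nat ->
        Rabs (sum_n (xm_sin_term q s t) n - Series (xm_sin_term q s t)) < eps)) /\
  (Nat.even q = false -> forall t, xmean q s t = PI / 2).
Proof.
  intros Hq Hs. split; [|split].
  - intros t. apply exRInt_main; auto.
  - intros He. split; [|split; [|split; [|split]]].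
    + intros t. apply xmean_even; auto.
    + intros t. split. eexists. apply xmean_deriv; auto.
      apply (continuous_ext (fun t => Ccoef q s * Series (xm_sin_term q s t))).
      { intros x. symmetry. apply is_derive_unique. apply xmean_deriv; auto. }
      apply (continuous_mult (fun _ => Ccoef q s) (fun t => Series (xm_sin_term q s t))).
      apply continuous_const. apply Ssin_cont; auto.
    + intros t. apply xmean_deriv; auto.
    + intros t. apply abs_series; auto.
    + intros eps. apply unif; auto.
  - intros Ho t. apply xmean_odd; auto.
Qed.
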